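(* Let $(X,f)$ be a dynamical system and let $S\subset X$ be a syndetically scrambled set for $f$ with $f(S)\subset S$ which contains a Cantor set $K$. Suppose that for every nonempty open $U\subset X$ there is $n\in\mathbb N$ with $f^n(K)\subset f^n(U)$. Then $f$ has a dense Mycielski set $T$ with $f(T)\subset T$ which is syndetically scrambled for $f$. Moreover, if $S$ is syndetically $\varepsilon$-scrambled, then so is $T$.
   Context: Dynamical system: compact metric space $X$ with metric $d$ and continuous $f$. Syndetic: subset of $\mathbb N$ meeting every set with arbitrarily long runs of consecutive integers. $\mathrm{Asy}(f)=\{(x,y):d(f^nx,f^ny)\to0\}$, $\mathrm{SProx}(f)=\{(x,y):\{n:d(f^nx,f^ny)<\eta\}$ syndetic for all $\eta>0\}$. A syndetically scrambled set has at least two points and all distinct pairs in $\mathrm{SProx}(f)\setminus\mathrm{Asy}(f)$; syndetically $\varepsilon$-scrambled if also $\limsup_n d(f^nx,f^ny)\ge\varepsilon$ for all distinct pairs. Cantor set: nonempty compact perfect totally disconnected; Mycielski set: countable union of Cantor sets. *)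

(* Defs.v *)
From Stdlib Require Import Reals Lra List.
Open Scope R_scope.

Section Dyn.
Context {X : Type} (d : X -> X -> R).

Definition is_metric : Prop :=
  (forall x y, 0 <= d x y) /\ (forall x y, d x y = 0 <-> x = y) /\
  (forall x y, d x y = d y x) /\ (forall x y z, d x z <= d x y + d y z).

Definition m_open (U : X -> Prop) : Prop :=
  forall x, U x -> exists r, 0 < r /\ forall y, d x y < r -> U y.

Definition m_compact (A : X -> Prop) : Prop :=
  forall (I : Type) (U : I -> X -> Prop),
    (forall i, m_open (U i)) ->
    (forall x, A x -> exists i, U i x) ->
    exists l : list I, forall x, A x -> exists i, In i l /\ U i x.

Definition compact_space : Prop := m_compact (fun _ => True).

Definition continuous_map (f : X -> X) : Prop :=
  forall x eps, 0 < eps -> exists delta, 0 < delta /\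
    forall y, d x y < delta -> d (f x) (f y) < eps.

Definition m_connected (C : X -> Prop) : Prop :=
  ~ exists U V, m_open U /\ m_open V /\
      (forall x, C x -> U x \/ V x) /\
      (exists x, C x /\ U x) /\ (exists x, C x /\ V x) /\
      (forall x, C x -> U x -> V x -> False).

Definition totally_disconnected (K : X -> Prop) : Prop :=
  forall C, (forall x, C x -> K x) -> m_connected C ->
    forall x y, C x -> C y -> x = y.

Definition m_closed (K : X -> Prop) : Prop := m_open (fun x => ~ K x).

Definition perfect_set (K : X -> Prop) : Prop :=
  m_closed K /\
  forall x, K x -> forall eps, 0 < eps -> exists y, K y /\ y <> x /\ d x y < eps.

Definition cantor_set (K : X -> Prop) : Prop :=
  (exists x, K x) /\ m_compact K /\ perfect_set K /\ totally_disconnected K.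

Definition mycielski_set (T : X -> Prop) : Prop :=
  exists C : nat -> X -> Prop, (forall n, cantor_set (C n)) /\
    forall x, T x <-> exists n, C n x.

Definition m_dense (T : X -> Prop) : Prop :=
  forall U, m_open U -> (exists x, U x) -> exists t, T t /\ U t.

Definition thick (B : nat -> Prop) : Prop :=
  forall L, exists m, forall i, (i < L)%nat -> B (m + i)%nat.

Definition syndetic (A : nat -> Prop) : Prop :=
  forall B, thick B -> exists n, A n /\ B n.

Definition asymptotic (f : X -> X) (x y : X) : Prop :=
  Un_cv (fun n => d (Nat.iter n f x) (Nat.iter n f y)) 0.

Definition synd_proximal (f : X -> X) (x y : X) : Prop :=
  forall eta, 0 < eta -> syndetic (fun n => d (Nat.iter n f x) (Nat.iter n f y) < eta).

Definition synd_scrambled (f : X -> X) (S : X -> Prop) : Prop :=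
  (exists x y, S x /\ S y /\ x <> y) /\
  forall x y, S x -> S y -> x <> y ->
    synd_proximal f x y /\ ~ asymptotic f x y.

Definition limsup_ge (f : X -> X) (eps : R) (x y : X) : Prop :=
  forall delta, 0 < delta -> forall N, exists n, (N <= n)%nat /\
    eps - delta < d (Nat.iter n f x) (Nat.iter n f y).

Definition synd_eps_scrambled (f : X -> X) (eps : R) (S : X -> Prop) : Prop :=
  synd_scrambled f S /\
  forall x y, S x -> S y -> x <> y -> limsup_ge f eps x y.

End Dyn.

(* Main.v *)
Require Import Defs.
From Stdlib Require Import Reals.
Open Scope R_scope.
From Stdlib Require Import Reals Lra Lia List Arith Classical ClassicalEpsilon.
From Stdlib Require Cantor.
Open Scope R_scope.

Section Metric.
Variable X : Type.
Variable d : X -> X -> R.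
Hypothesis Hd : is_metric d.

Lemma d_pos x y : 0 <= d x y. Proof. apply Hd. Qed.
Lemma d_refl x : d x x = 0. Proof. apply Hd; auto. Qed.
Lemma d_eq0 x y : d x y = 0 -> x = y. Proof. apply Hd. Qed.
Lemma d_sym x y : d x y = d y x. Proof. apply Hd. Qed.
Lemma d_tri x y z : d x z <= d x y + d y z. Proof. apply Hd. Qed.
Lemma d_neq x y : x <> y -> 0 < d x y.
Proof. intros H. destruct (Rle_lt_or_eq_dec 0 (d x y) (d_pos x y)); auto.
  exfalso; apply H, d_eq0; auto. Qed.

Lemma open_ball c r : m_open d (fun y => d c y < r).
Proof. intros x Hx. exists (r - d c x); split; [lra|].
  intros y Hy. pose proof (d_tri c x y). lra. Qed.

Lemma open_far c r : m_open d (fun y => r < d c y).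
Proof. intros x Hx. exists (d c x - r); split; [lra|].
  intros y Hy. pose proof (d_tri c y x). rewrite (d_sym y x) in H. lra. Qed.

Lemma closed_cball c r : m_closed d (fun y => d c y <= r).
Proof. intros x Hx. apply Rnot_le_lt in Hx. destruct (open_far c r x Hx) as [e [He H]].
  exists e; split; auto. intros y Hy. specialize (H y Hy). lra. Qed.

Lemma closed_inter2 (P Q : X -> Prop) : m_closed d P -> m_closed d Q -> m_closed d (fun x => P x /\ Q x).
Proof. intros HP HQ x Hx. apply not_and_or in Hx. destruct Hx as [Hx|Hx].
  - destruct (HP x Hx) as [r [Hr H]]. exists r; split; auto. intros y Hy [A B]. exact (H y Hy A).
  - destruct (HQ x Hx) as [r [Hr H]]. exists r; split; auto. intros y Hy [A B]. exact (H y Hy B). Qed.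

Lemma closed_inter_all (I : Type) (P : I -> X -> Prop) : (forall i, m_closed d (P i)) -> m_closed d (fun x => forall i, P i x).
Proof. intros HP x Hx. apply not_all_ex_not in Hx. destruct Hx as [i Hi].
  destruct (HP i x Hi) as [r [Hr H]]. exists r; split; auto. intros y Hy A. exact (H y Hy (A i)). Qed.

Lemma closed_union2 (P Q : X -> Prop) : m_closed d P -> m_closed d Q -> m_closed d (fun x => P x \/ Q x).
Proof. intros HP HQ x Hx. apply not_or_and in Hx. destruct Hx as [H1 H2].
  destruct (HP x H1) as [r1 [Hr1 G1]]. destruct (HQ x H2) as [r2 [Hr2 G2]].
  exists (Rmin r1 r2); split. apply Rmin_pos; auto.
  intros y Hy [A|A]. apply (G1 y); auto. pose proof (Rmin_l r1 r2); lra.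
  apply (G2 y); auto. pose proof (Rmin_r r1 r2); lra. Qed.

Lemma closed_empty : m_closed d (fun _ => False).
Proof. intros x _. exists 1; split; [lra|]. auto. Qed.

Lemma closed_ext (P Q : X -> Prop) : (forall x, P x <-> Q x) -> m_closed d P -> m_closed d Q.
Proof. intros E HP x Hx. assert (~ P x) by (rewrite E; auto).
  destruct (HP x H) as [r [Hr G]]. exists r; split; auto. intros y Hy. rewrite <- E. auto. Qed.

Lemma closed_union_list (I : Type) (l : list I) (P : I -> X -> Prop) :
  (forall i, In i l -> m_closed d (P i)) -> m_closed d (fun x => exists i, In i l /\ P i x).
Proof. induction l as [|a l IH]; intros H.
  - apply closed_ext with (fun _ => False). intros x; split; [tauto|]. intros [i [[] _]]. apply closed_empty.
  - apply closed_ext with (fun x => P a x \/ exists i, In i l /\ P i x).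
    + intros x; split. intros [A|[i [B C]]]. exists a; simpl; auto. exists i; simpl; auto.
      intros [i [[B|B] C]]. subst; auto. right; exists i; auto.
    + apply closed_union2. apply H; simpl; auto. apply IH; intros; apply H; simpl; auto. Qed.

Lemma list_max_bound (l : list nat) : exists N, forall i, In i l -> (i <= N)%nat.
Proof. induction l as [|a l [N HN]]. exists 0%nat; intros i []. exists (Nat.max a N).
  intros i [H|H]. subst; lia. specialize (HN i H); lia. Qed.

Lemma inv_le n m : (n <= m)%nat -> / (INR m + 1) <= / (INR n + 1).
Proof. intros H. apply Rinv_le_contravar. pose proof (pos_INR n); lra. apply le_INR in H; lra. Qed.

Lemma compact_closed (Q : X -> Prop) : m_compact d Q -> m_closed d Q.
Proof. intros HQ x Hx.
  destruct (HQ nat (fun n z => / (INR n + 1) < d x z)) as [l Hl].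
  - intros n; apply open_far.
  - intros z Hz. assert (x <> z) by (intro; subst; auto).
    apply d_neq in H. destruct (INR_archimed (d x z) 1) as [n Hn]; auto.
    exists n. apply Rmult_lt_reg_r with (INR n + 1). pose proof (pos_INR n); lra.
    rewrite Rinv_l. nra. pose proof (pos_INR n); lra.
  - destruct (list_max_bound l) as [N HN]. exists (/ (INR N + 1)); split.
    apply Rinv_0_lt_compat. pose proof (pos_INR N); lra.
    intros y Hy Qy. destruct (Hl y Qy) as [i [Hi Hi2]]. pose proof (inv_le _ _ (HN i Hi)). lra. Qed.

Lemma closed_compact (Hcpt : compact_space d) (Q : X -> Prop) : m_closed d Q -> m_compact d Q.
Proof. intros HQ I U HU Hcov.
  destruct (Hcpt (option I) (fun o x => match o with Some i => U i x | None => ~ Q x end)) as [l Hl].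
  - intros [i|]; auto.
  - intros x _. destruct (classic (Q x)) as [H|H]. destruct (Hcov x H) as [i Hi]. exists (Some i); auto.
    exists None; auto.
  - exists (flat_map (fun o => match o with Some i => i :: nil | None => nil end) l).
    intros x Hx. destruct (Hl x Logic.I) as [[i|] [H1 H2]]; [|contradiction].
    exists i; split; auto. apply in_flat_map. exists (Some i); simpl; auto. Qed.

Lemma preimage_open (h : X -> X) (U : X -> Prop) : continuous_map d h -> m_open d U -> m_open d (fun x => U (h x)).
Proof. intros Hh HU x Hx. destruct (HU _ Hx) as [r [Hr G]]. destruct (Hh x r Hr) as [e [He G2]].
  exists e; split; auto. Qed.

Lemma preimage_closed (h : X -> X) (U : X -> Prop) : continuous_map d h -> m_closed d U -> m_closed d (fun x => U (h x)).
Proof. intros Hh HU. apply (preimage_open h _ Hh HU). Qed.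

Lemma image_compact (h : X -> X) (Q : X -> Prop) : continuous_map d h -> m_compact d Q ->
  m_compact d (fun y => exists x, Q x /\ y = h x).
Proof. intros Hh HQ I U HU Hcov. destruct (HQ I (fun i x => U i (h x))) as [l Hl].
  - intros i; apply preimage_open; auto.
  - intros x Hx. apply Hcov. exists x; auto.
  - exists l. intros y [x [Hx ->]]. auto. Qed.

Lemma iter_cont (h : X -> X) n : continuous_map d h -> continuous_map d (Nat.iter n h).
Proof. intros Hh. induction n as [|n IH]; simpl.
  - intros x e He. exists e; split; auto.
  - intros x e He. destruct (Hh (Nat.iter n h x) e He) as [e1 [He1 G1]].
    destruct (IH x e1 He1) as [e2 [He2 G2]]. exists e2; split; auto.
    intros y Hy. apply G1, G2, Hy. Qed.

End Metric.
Section Cantor.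
Variable X : Type.
Variable d : X -> X -> R.
Hypothesis Hd : is_metric d.
Hypothesis Hcpt : compact_space d.

Lemma nested_inter (Q : nat -> X -> Prop) : (forall n, m_closed d (Q n)) -> (forall n, exists x, Q n x) ->
  (forall n x, Q (S n) x -> Q n x) -> exists x, forall n, Q n x.
Proof. intros HC HN0 HD. apply NNPP; intros Hno.
  assert (Hmono : forall n m x, (n <= m)%nat -> Q m x -> Q n x).
  { intros n m x Hnm. induction Hnm; auto. }
  destruct (Hcpt nat (fun n x => ~ Q n x)) as [l Hl].
  - intros n; apply HC.
  - intros x _. apply NNPP; intros H. apply Hno. exists x. intros n. apply NNPP; intros H2. apply H; eauto.
  - destruct (list_max_bound l) as [N HN]. destruct (HN0 N) as [y Hy].
    destruct (Hl y Logic.I) as [i [Hi Hi2]]. apply Hi2. apply (Hmono i N); auto. Qed.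

Definition Sep (Q : X -> Prop) : Prop :=
  forall a b, Q a -> Q b -> a <> b -> exists P1 P2 : X -> Prop,
    m_closed d P1 /\ m_closed d P2 /\ (forall x, Q x -> P1 x \/ P2 x) /\
    (forall x, P1 x -> Q x) /\ (forall x, P2 x -> Q x) /\ (forall x, P1 x -> P2 x -> False) /\ P1 a /\ P2 b.

Definition CantorSep (Q : X -> Prop) : Prop :=
  (exists x, Q x) /\ m_closed d Q /\
  (forall x, Q x -> forall eps, 0 < eps -> exists y, Q y /\ y <> x /\ d x y < eps) /\ Sep Q.

Lemma sep_td (Q : X -> Prop) : Sep Q -> totally_disconnected d Q.
Proof. intros HS C HCQ HC x y Cx Cy. apply NNPP; intros Hxy.
  destruct (HS x y (HCQ x Cx) (HCQ y Cy) Hxy) as [P1 [P2 [C1 [C2 [Cov [_ [_ [Dj [Px Py]]]]]]]]].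
  apply HC. exists (fun z => ~ P2 z), (fun z => ~ P1 z). repeat split; auto.
  - intros z Hz. destruct (Cov z (HCQ z Hz)) as [A|A]. left; intro B; eauto. right; intro B; eauto.
  - exists x; split; auto. intro B; eauto.
  - exists y; split; auto. intro B; eauto.
  - intros z Hz A B. destruct (Cov z (HCQ z Hz)); auto. Qed.

Lemma cantorsep_cantor (Q : X -> Prop) : CantorSep Q -> cantor_set d Q.
Proof. intros [H1 [H2 [H3 H4]]]. repeat split; auto. apply closed_compact; auto. apply sep_td; auto. Qed.

Lemma image_closed (h : X -> X) (Q : X -> Prop) : continuous_map d h -> m_closed d Q ->
  m_closed d (fun y => exists x, Q x /\ y = h x).
Proof. intros Hh HQ. apply compact_closed; auto. apply image_compact; auto. apply closed_compact; auto. Qed.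

Lemma cantorsep_image (h : X -> X) (Q : X -> Prop) : continuous_map d h -> CantorSep Q ->
  (forall x y, Q x -> Q y -> h x = h y -> x = y) -> CantorSep (fun y => exists x, Q x /\ y = h x).
Proof. intros Hh [[x0 H1] [H2 [H3 H4]]] Hinj. repeat split.
  - exists (h x0), x0; auto.
  - apply image_closed; auto.
  - intros y [x [Qx ->]] eps Heps. destruct (Hh x eps Heps) as [e [He G]].
    destruct (H3 x Qx e He) as [x' [Qx' [Hne Hd']]]. exists (h x'); repeat split.
    exists x'; auto. intro E. apply Hne, Hinj; auto. auto.
  - intros a b [xa [Qa ->]] [xb [Qb ->]] Hab. assert (xa <> xb) by (intro; subst; auto).
    destruct (H4 xa xb Qa Qb H) as [P1 [P2 [C1 [C2 [Cov [S1 [S2 [Dj [Pa Pb]]]]]]]]].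
    exists (fun y => exists x, P1 x /\ y = h x), (fun y => exists x, P2 x /\ y = h x). repeat split.
    + apply image_closed; auto.
    + apply image_closed; auto.
    + intros y [x [Qx ->]]. destruct (Cov x Qx); [left|right]; exists x; auto.
    + intros y [x [Px ->]]. exists x; auto.
    + intros y [x [Px ->]]. exists x; auto.
    + intros y [x [Px ->]] [x' [Px' E]]. apply (Dj x); auto. rewrite (Hinj x x'); auto.
    + exists xa; auto.
    + exists xb; auto. Qed.

Fixpoint all_lists (n : nat) : list (list bool) :=
  match n with
  | O => nil :: nil
  | S n => flat_map (fun s => (true :: s) :: (false :: s) :: nil) (all_lists n)
  end.

Lemma all_lists_spec s : In s (all_lists (length s)).
Proof. induction s as [|b s IH]; simpl; auto. apply in_flat_map. exists s; split; auto.
  destruct b; simpl; auto. Qed.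

Lemma all_lists_len n s : In s (all_lists n) -> length s = n.
Proof. revert s; induction n as [|n IH]; simpl; intros s H.
  - destruct H as [H|[]]; subst; auto.
  - apply in_flat_map in H. destruct H as [t [Ht H]]. simpl in H.
    destruct H as [H|[H|[]]]; subst; simpl; rewrite (IH t); auto. Qed.

Section Scheme.
Variable P : list bool -> X -> Prop.
Hypothesis PS1 : forall s, m_closed d (P s) /\ exists x, P s x.
Hypothesis PS2 : forall s b x, P (b :: s) x -> P s x.
Hypothesis PS3 : forall s x, P (true :: s) x -> P (false :: s) x -> False.
Hypothesis PS4 : forall s b x y, P (b :: s) x -> P (b :: s) y -> d x y <= 2 / (INR (length s) + 1).

Lemma P_anc l s x : P (l ++ s) x -> P s x.
Proof. induction l as [|b l IH]; simpl; auto. intros H; apply IH; eapply PS2; eauto. Qed.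

Lemma P_disj s t x : length s = length t -> s <> t -> P s x -> P t x -> False.
Proof. revert t; induction s as [|b s IH]; intros [|b' t] Hl Hne Hs Ht; simpl in *; try discriminate.
  - apply Hne; auto.
  - destruct (list_eq_dec Bool.bool_dec s t) as [E|E].
    + subst. destruct b, b'; try (apply Hne; reflexivity); eauto.
    + apply (IH t); eauto.
Qed.

Definition Dm (s : list bool) (x : X) : Prop := P s x /\ forall n, exists t, length t = n /\ P t x.

Lemma Dm_sub s x : Dm s x -> P s x. Proof. intros [H _]; auto. Qed.

Lemma Dm_nonempty s : exists x, Dm s x.
Proof. destruct (nested_inter (fun n => P (repeat false n ++ s))) as [x Hx].
  - intros; apply PS1.
  - intros; apply PS1.
  - intros n x H. simpl in H. eapply PS2; eauto.
  - exists x. split. apply (Hx 0%nat). intros n. destruct (le_lt_dec (length s) n) as [H|H].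
    + exists (repeat false (n - length s) ++ s). split; auto. rewrite length_app, repeat_length. lia.
    + exists (skipn (length s - n) s). split. rewrite length_skipn; lia.
      apply P_anc with (firstn (length s - n) s). rewrite firstn_skipn. apply (Hx 0%nat). Qed.

Lemma Dm_closed s : m_closed d (Dm s).
Proof. apply closed_inter2. apply PS1. apply closed_ext with (fun x => forall n, exists t, In t (all_lists n) /\ P t x).
  - intros x; split; intros H n; destruct (H n) as [t [A B]]; exists t; split; auto.
    + apply all_lists_len; auto.
    + subst; apply all_lists_spec.
  - apply closed_inter_all. intros n. apply closed_union_list. intros; apply PS1.
Qed.

Lemma small_inv e : 0 < e -> exists N, 2 / (INR N + 1) < e.
Proof. intros He. destruct (INR_archimed e 2) as [N HN]; auto. exists N.
  pose proof (pos_INR N). apply Rmult_lt_reg_r with (INR N + 1). lra.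
  unfold Rdiv. rewrite Rmult_assoc, Rinv_l by lra. nra. Qed.

Lemma Dm_descend s t x : (length s <= length t)%nat -> P s x -> P t x -> forall y, P t y -> P s y.
Proof. intros Hl Hs Ht y Hy.
  assert (E : t = firstn (length t - length s) t ++ skipn (length t - length s) t) by (symmetry; apply firstn_skipn).
  assert (skipn (length t - length s) t = s).
  { apply NNPP; intros Hne. apply (P_disj (skipn (length t - length s) t) s x).
    rewrite length_skipn; lia. auto. apply P_anc with (firstn (length t - length s) t). rewrite <- E; auto. auto. }
  rewrite <- H. apply P_anc with (firstn (length t - length s) t). rewrite <- E; auto. Qed.

Lemma Dm_perfect s x : Dm s x -> forall eps, 0 < eps -> exists y, Dm s y /\ y <> x /\ d x y < eps.
Proof. intros [Hs Hall] eps Heps. destruct (small_inv eps Heps) as [N HN].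
  destruct (Hall (S (N + length s))) as [[|b t] [Hlt Ht]]; simpl in Hlt; try discriminate.
  injection Hlt as Hlt.
  assert (Hsub : forall y, P (b :: t) y -> P s y).
  { apply Dm_descend with x; auto. simpl; lia. }
  assert (Hc : exists c, ~ P (c :: b :: t) x).
  { destruct (classic (P (true :: b :: t) x)) as [H|H]. exists false; intro H2; eapply PS3; eauto. exists true; auto. }
  destruct Hc as [c Hc]. destruct (Dm_nonempty (c :: b :: t)) as [y [Hy1 Hy2]].
  exists y. split; [|split].
  - split; auto. apply Hsub. eapply PS2; eauto.
  - intro E; subst; auto.
  - eapply Rle_lt_trans. apply (PS4 t b). auto. eapply PS2; eauto. rewrite Hlt.
    eapply Rle_lt_trans; [|apply HN]. unfold Rdiv. apply Rmult_le_compat_l. lra. apply inv_le. lia. Qed.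

Lemma Dm_sep s : Sep (Dm s).
Proof. intros a b Ha Hb Hab. pose proof (d_neq X d Hd _ _ Hab) as Hpos.
  destruct (small_inv _ Hpos) as [N HN].
  destruct (proj2 Ha (S N)) as [[|c t] [Hlt Ht]]; simpl in Hlt; try discriminate. injection Hlt as Hlt.
  destruct (proj2 Hb (S N)) as [t2 [Hlt2 Ht2]].
  assert (Hne : c :: t <> t2).
  { intro E; subst t2. pose proof (PS4 t c a b Ht Ht2). rewrite Hlt in H. lra. }
  exists (fun x => Dm s x /\ P (c :: t) x), (fun x => Dm s x /\ exists u, In u (all_lists (S N)) /\ u <> c :: t /\ P u x).
  split;[|split;[|split;[|split;[|split;[|split;[|split]]]]]].
  - apply closed_inter2. apply Dm_closed. apply PS1.
  - apply closed_inter2. apply Dm_closed.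
    apply closed_ext with (fun x => exists u, In u (filter (fun u => if list_eq_dec Bool.bool_dec u (c :: t) then false else true) (all_lists (S N))) /\ P u x).
    + intros x; split.
      * intros [u [Hu Pu]]; exists u.
        apply filter_In in Hu. destruct Hu as [Hu1 Hu2]. destruct (list_eq_dec Bool.bool_dec u (c :: t)); try discriminate. auto.
      * intros [u [Hu1 [Hu2 Pu]]]; exists u. split; auto. apply filter_In. split; auto. destruct (list_eq_dec Bool.bool_dec u (c :: t)); tauto.
    + apply closed_union_list; intros; apply PS1.
  - intros x Hx. destruct (proj2 Hx (S N)) as [u [Hlu Pu]].
    destruct (list_eq_dec Bool.bool_dec u (c :: t)) as [E|E].
    + subst; left; auto.
    + right; split; auto. exists u; repeat split; auto. rewrite <- Hlu; apply all_lists_spec.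
  - intros x [A _]; auto.
  - intros x [A _]; auto.
  - intros x [_ A] [_ [u [Hu [Hne2 Pu]]]]. apply (P_disj u (c :: t) x); auto.
    apply all_lists_len in Hu. simpl; lia.
  - split; auto.
  - split; auto. exists t2; repeat split; auto. rewrite <- Hlt2; apply all_lists_spec. Qed.

Lemma Dm_cantorsep s : CantorSep (Dm s).
Proof. split. apply Dm_nonempty. split. apply Dm_closed. split. apply Dm_perfect. apply Dm_sep. Qed.

Lemma Dm_same_level s t x y : length s = length t -> s <> t -> P s x -> P t y -> x <> y.
Proof. intros Hl Hne Hx Hy E; subst; eapply P_disj; eauto. Qed.

End Scheme. End Cantor.

Definition pc {X : Type} (d : X -> X -> R) (M : X -> Prop) (p : X * R) (x : X) : Prop := M x /\ d (fst p) x <= snd p.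

Section Pieces.
Variable X : Type.
Variable d : X -> X -> R.
Hypothesis Hd : is_metric d.

Lemma pc_closed M p : m_closed d M -> m_closed d (pc d M p).
Proof. intros HM. apply closed_inter2; auto. apply closed_cball; auto. Qed.

Lemma pc_center M c r : M c -> 0 <= r -> pc d M (c, r) c.
Proof. intros; split; simpl; auto. rewrite d_refl; auto. Qed.

Lemma pc_sub M c r z rho x : d c z <= r / 2 -> rho <= r / 2 -> pc d M (z, rho) x -> pc d M (c, r) x.
Proof. intros H1 H2 [Hx Hd2]; split; auto; simpl in *. pose proof (d_tri X d Hd c z x). lra. Qed.

Lemma pc_sub2 M p z rho x : d (fst p) z <= snd p / 2 -> rho <= snd p / 2 -> pc d M (z, rho) x -> pc d M p x.
Proof. destruct p as [c r]; simpl; apply pc_sub. Qed.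

Lemma pc_sub_r2 M p rho x : rho <= snd p -> pc d M (fst p, rho) x -> pc d M p x.
Proof. destruct p as [c r]; simpl. intros H [A B]; split; simpl in *; auto; lra. Qed.

Lemma pc_diam M c r x y : pc d M (c, r) x -> pc d M (c, r) y -> d x y <= 2 * r.
Proof. intros [_ H1] [_ H2]; simpl in *. pose proof (d_tri X d Hd x c y). rewrite (d_sym X d Hd x c) in H. lra. Qed.

Lemma perfect_near M c r : perfect_set d M -> M c -> 0 < r -> forall q : X, exists z, M z /\ d c z <= r / 2 /\ z <> q.
Proof. intros [_ HP] Hc Hr q. destruct (classic (c = q)) as [E|E].
  - destruct (HP c Hc (r/2)) as [y [Hy [Hne Hdy]]]. lra. exists y; repeat split; auto. lra. congruence.
  - exists c; repeat split; auto. rewrite d_refl; auto. lra. Qed.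

Lemma perfect_near2 M c r : perfect_set d M -> M c -> 0 < r -> exists z, M z /\ d c z <= r / 2 /\ z <> c.
Proof. intros HP Hc Hr. destruct (perfect_near M c r HP Hc Hr c) as [z Hz]. exists z; auto. Qed.

End Pieces.

Section DynBasic.
Variable X : Type.
Variable d : X -> X -> R.
Variable f : X -> X.
Hypothesis Hd : is_metric d.
Variable Sc : X -> Prop.
Hypothesis HS : synd_scrambled d f Sc.
Hypothesis HfS : forall x, Sc x -> Sc (f x).

Lemma iter_S n x : Sc x -> Sc (Nat.iter n f x).
Proof. intros H. apply Nat.iter_invariant; auto. Qed.

Lemma f_inj_S x y : Sc x -> Sc y -> f x = f y -> x = y.
Proof. intros Hx Hy E. apply NNPP; intros Hne. destruct (proj2 HS x y Hx Hy Hne) as [_ Ha]. apply Ha.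
  intros eps Heps. exists 1%nat. intros [|n] Hn; [lia|]. rewrite !Nat.iter_succ_r, E, d_refl; auto.
  unfold R_dist. rewrite Rminus_0_r, Rabs_R0; auto. Qed.

Lemma iter_inj_S n x y : Sc x -> Sc y -> Nat.iter n f x = Nat.iter n f y -> x = y.
Proof. induction n as [|n IH]; simpl; auto. intros Hx Hy E. apply IH; auto. apply f_inj_S; auto; apply iter_S; auto. Qed.

Lemma fin_min (a : nat -> R) c : (forall k, 0 < a k) -> exists eta, 0 < eta /\ forall k, (k < c)%nat -> eta <= a k.
Proof. intros Ha. induction c as [|c [e [He H]]]. exists 1; split; [lra|]; intros; lia.
  exists (Rmin e (a c)); split. apply Rmin_pos; auto. intros k Hk. destruct (Nat.eq_dec k c). subst; apply Rmin_r.
  eapply Rle_trans. apply Rmin_l. apply H; lia. Qed.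

Lemma iter_period c z q : Nat.iter c f z = z -> Nat.iter (c * q) f z = z.
Proof. intros Hz. induction q as [|q IH]. rewrite Nat.mul_0_r; auto.
  replace (c * Datatypes.S q)%nat with (c + c * q)%nat by lia. rewrite Nat.iter_add, IH; auto. Qed.

Lemma iter_mod c z n : c <> 0%nat -> Nat.iter c f z = z -> Nat.iter n f z = Nat.iter (n mod c) f z.
Proof. intros Hc Hz. assert (E : n = (n mod c + c * (n / c))%nat) by (rewrite (Nat.div_mod_eq n c) at 1; lia).
  transitivity (Nat.iter (n mod c + c * (n / c)) f z). f_equal; auto.
  rewrite Nat.iter_add, iter_period; auto. Qed.

Lemma periodic_contra z1 z2 c : Sc z1 -> Sc z2 -> z1 <> z2 -> (1 <= c)%nat ->
  Nat.iter c f z1 = z1 -> Nat.iter c f z2 = z2 -> False.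
Proof. intros H1 H2 Hne Hc P1 P2.
  set (a := fun n => d (Nat.iter n f z1) (Nat.iter n f z2)).
  assert (Ha : forall k, 0 < a k). { intros k. apply d_neq; auto. intro E. apply Hne. eapply iter_inj_S; eauto. }
  destruct (fin_min a c Ha) as [eta [He Heta]].
  destruct (proj2 HS z1 z2 H1 H2 Hne) as [Hp _].
  destruct (Hp eta He (fun _ => True)) as [n [Hn _]].
  - intros L. exists 0%nat; auto.
  - assert (a n = a (n mod c)). { unfold a. rewrite (iter_mod c z1 n), (iter_mod c z2 n); auto; lia. }
    fold (a n) in Hn. rewrite H in Hn. specialize (Heta (n mod c)%nat). assert (n mod c < c)%nat by (apply Nat.mod_upper_bound; lia).
    specialize (Heta H0). lra. Qed.

End DynBasic.

Section Indep.
Variable X : Type.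
Variable d : X -> X -> R.
Variable f : X -> X.
Hypothesis Hd : is_metric d.
Hypothesis Hcpt : compact_space d.
Hypothesis Hf : continuous_map d f.
Variable Sc : X -> Prop.
Hypothesis HS : synd_scrambled d f Sc.
Hypothesis HfS : forall x, Sc x -> Sc (f x).
Variable K : X -> Prop.
Hypothesis HKS : forall x, K x -> Sc x.
Hypothesis HKc : m_closed d K.
Hypothesis HKp : perfect_set d K.
Variable k0 : X.
Hypothesis Hk0 : K k0.

Let pcK := pc d K.

Definition BV n (F : list bool -> X * R) := forall s, length s = n -> K (fst (F s)) /\ 0 < snd (F s).
Definition SubF n (F' F : list bool -> X * R) := BV n F' /\ forall s, length s = n -> forall x, pcK (F' s) x -> pcK (F s) x.
Definition Cons (F : list bool -> X * R) s t c := forall z w, pcK (F s) z -> pcK (F t) w -> z <> Nat.iter c f w.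

Lemma SubF_refl n F : BV n F -> SubF n F F.
Proof. intros H; split; auto. Qed.

Lemma SubF_trans n F1 F2 F3 : SubF n F1 F2 -> SubF n F2 F3 -> SubF n F1 F3.
Proof. intros [A B] [C D]; split; auto. Qed.

Lemma Cons_mono n F' F s t c : SubF n F' F -> length s = n -> length t = n -> Cons F s t c -> Cons F' s t c.
Proof. intros [_ H] Hs Ht HC z w Hz Hw. apply HC; apply H; auto. Qed.

Lemma pc_sub_r c r rho x : rho <= r -> pcK (c, rho) x -> pcK (c, r) x.
Proof. intros H [A B]; split; simpl in *; auto; lra. Qed.

Lemma fix1 n F s t c : BV n F -> length s = n -> length t = n -> (1 <= c)%nat ->
  exists F', SubF n F' F /\ Cons F' s t c.
Proof. intros HB Hs Ht Hc. destruct (HB s Hs) as [Kcs Hrs].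
  set (cs := fst (F s)) in *. set (rs := snd (F s)) in *.
  pose proof (iter_cont X d f c Hf) as Hfc.
  destruct (list_eq_dec Bool.bool_dec s t) as [E|E].
  - subst t.
    assert (Hz : exists z', K z' /\ d cs z' <= rs / 2 /\ Nat.iter c f z' <> z').
    { destruct (perfect_near2 X d Hd K cs rs HKp Kcs Hrs) as [y [Ky [Hy Hne]]].
      destruct (classic (Nat.iter c f cs = cs)) as [P1|P1].
      - destruct (classic (Nat.iter c f y = y)) as [P2|P2].
        + exfalso. apply (periodic_contra X d f Hd Sc HS HfS cs y c); auto.
        + exists y; auto.
      - exists cs; repeat split; auto. rewrite d_refl; auto. lra. }
    destruct Hz as [z' [Kz [Hdz Hper]]].
    assert (He : 0 < d z' (Nat.iter c f z')) by (apply d_neq; auto).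
    set (e := d z' (Nat.iter c f z')) in *.
    destruct (Hfc z' (e / 3)) as [del [Hdel Hcont]]. lra.
    set (rho := Rmin (rs / 2) (Rmin (e / 3) (del / 2))).
    assert (R1 : rho <= rs / 2) by apply Rmin_l.
    assert (R2 : rho <= e / 3) by (eapply Rle_trans; [apply Rmin_r|apply Rmin_l]).
    assert (R3 : rho <= del / 2) by (eapply Rle_trans; [apply Rmin_r|apply Rmin_r]).
    assert (R4 : 0 < rho) by (apply Rmin_pos; [lra|apply Rmin_pos; lra]).
    exists (fun u => if list_eq_dec Bool.bool_dec u s then (z', rho) else F u). split; [split|].
    + intros u Hu. destruct (list_eq_dec Bool.bool_dec u s); simpl; auto.
    + intros u Hu x. destruct (list_eq_dec Bool.bool_dec u s); auto. subst u. apply (pc_sub2 X d Hd K (F s) z' rho); auto.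
    + intros z w. destruct (list_eq_dec Bool.bool_dec s s) as [_|N]; [|congruence].
      intros [_ Hz] [_ Hw] Ez; simpl in *. subst z.
      specialize (Hcont w ltac:(lra)).
      pose proof (d_tri X d Hd z' (Nat.iter c f w) (Nat.iter c f z')). fold e in H.
      rewrite (d_sym X d Hd (Nat.iter c f w)) in H. lra.
  - destruct (HB t Ht) as [Kct Hrt].
    set (ct := fst (F t)) in *. set (rt := snd (F t)) in *.
    set (q := Nat.iter c f ct).
    destruct (perfect_near X d Hd K cs rs HKp Kcs Hrs q) as [z' [Kz [Hdz Hne]]].
    assert (He : 0 < d z' q) by (apply d_neq; auto).
    set (e := d z' q) in *.
    destruct (Hfc ct (e / 3)) as [del [Hdel Hcont]]. lra.
    set (rs' := Rmin (rs / 2) (e / 3)). set (rt' := Rmin rt (del / 2)).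
    assert (R1 : rs' <= rs / 2) by apply Rmin_l.
    assert (R2 : rs' <= e / 3) by apply Rmin_r.
    assert (R3 : rt' <= rt) by apply Rmin_l.
    assert (R4 : rt' <= del / 2) by apply Rmin_r.
    assert (R5 : 0 < rs') by (apply Rmin_pos; lra).
    assert (R6 : 0 < rt') by (apply Rmin_pos; lra).
    exists (fun u => if list_eq_dec Bool.bool_dec u s then (z', rs') else if list_eq_dec Bool.bool_dec u t then (ct, rt') else F u).
    split; [split|].
    + intros u Hu. destruct (list_eq_dec Bool.bool_dec u s); simpl; auto.
      destruct (list_eq_dec Bool.bool_dec u t); simpl; auto.
    + intros u Hu x. destruct (list_eq_dec Bool.bool_dec u s).
      * subst u. apply (pc_sub2 X d Hd K (F s) z' rs'); auto.
      * destruct (list_eq_dec Bool.bool_dec u t); auto. subst u. apply (pc_sub_r2 X d K (F t) rt'); auto.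
    + intros z w. destruct (list_eq_dec Bool.bool_dec s s) as [_|N]; [|congruence].
      destruct (list_eq_dec Bool.bool_dec t s) as [N|_]; [congruence|].
      destruct (list_eq_dec Bool.bool_dec t t) as [_|N]; [|congruence].
      intros [_ Hz] [_ Hw] Ez; simpl in *. subst z.
      specialize (Hcont w ltac:(lra)). fold q in Hcont.
      pose proof (d_tri X d Hd z' (Nat.iter c f w) q). fold e in H.
      rewrite (d_sym X d Hd (Nat.iter c f w)) in H. lra.
Qed.

Lemma fix_list n (L : list (list bool * list bool * nat)) F : BV n F ->
  exists F', SubF n F' F /\ forall s t c, In (s, t, c) L -> length s = n -> length t = n -> (1 <= c)%nat -> Cons F' s t c.
Proof. induction L as [|[[s t] c] L IH]; intros HB.
  - exists F; split. apply SubF_refl; auto. intros s t c [].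
  - destruct (IH HB) as [F1 [HS1 HC1]].
    destruct (classic (length s = n /\ length t = n /\ (1 <= c)%nat)) as [[A [B C]]|Hno].
    + destruct (fix1 n F1 s t c (proj1 HS1) A B C) as [F2 [HS2 HC2]].
      exists F2; split. eapply SubF_trans; eauto.
      intros s' t' c' [E|Hin] Hs Ht Hc.
      * injection E as -> -> ->. auto.
      * apply (Cons_mono n F2 F1); auto.
    + exists F1; split; auto. intros s' t' c' [E|Hin] Hs Ht Hc.
      * injection E as -> -> ->. exfalso; auto.
      * auto.
Qed.

Definition Valid n (F : list bool -> X * R) : Prop :=
  BV n F /\
  (forall s t x, length s = n -> length t = n -> s <> t -> pcK (F s) x -> pcK (F t) x -> False) /\
  (forall s t c, length s = n -> length t = n -> (1 <= c <= n)%nat -> Cons F s t c) /\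
  (forall s x y, length s = n -> (0 < n)%nat -> pcK (F s) x -> pcK (F s) y -> d x y <= 2 / INR n).

Definition Child n (F' F : list bool -> X * R) : Prop :=
  forall s b x, length s = n -> pcK (F' (b :: s)) x -> pcK (F s) x.

Lemma nb_ex : exists nb : X * R -> X, forall p, K (fst p) -> 0 < snd p ->
  K (nb p) /\ d (fst p) (nb p) <= snd p / 2 /\ nb p <> fst p.
Proof. assert (H : forall p : X * R, exists y, K (fst p) -> 0 < snd p -> K y /\ d (fst p) y <= snd p / 2 /\ y <> fst p).
  { intros p. destruct (classic (K (fst p) /\ 0 < snd p)) as [[A B]|N].
    - destruct (perfect_near2 X d Hd K _ _ HKp A B) as [y Hy]. exists y; auto.
    - exists k0. intros A B; exfalso; auto. }
  exists (fun p => proj1_sig (constructive_indefinite_description _ (H p))).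
  intros p. exact (proj2_sig (constructive_indefinite_description _ (H p))). Qed.

Lemma refine_ex n F : Valid n F -> exists F', Valid (Datatypes.S n) F' /\ Child n F' F.
Proof. intros [HB [HDj [HCo HDi]]]. destruct nb_ex as [nb Hnb].
  set (rho := fun s => Rmin (Rmin (snd (F s) / 2) (d (fst (F s)) (nb (F s)) / 3)) (/ INR (Datatypes.S n))).
  set (F1 := fun u : list bool => match u return X * R with nil => F nil | b :: s => if b then (nb (F s), rho s) else (fst (F s), rho s) end).
  assert (Hrho : forall s, length s = n -> 0 < rho s /\ rho s <= snd (F s) / 2 /\ rho s <= d (fst (F s)) (nb (F s)) / 3
     /\ rho s <= / INR (Datatypes.S n)).
  { intros s Hs. destruct (HB s Hs) as [A B]. destruct (Hnb (F s) A B) as [C [D E]].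
    assert (0 < d (fst (F s)) (nb (F s))) by (apply d_neq; auto).
    unfold rho. split; [|split; [|split]].
    - apply Rmin_pos. apply Rmin_pos; lra. apply Rinv_0_lt_compat, lt_0_INR; lia.
    - eapply Rle_trans; apply Rmin_l.
    - eapply Rle_trans; [apply Rmin_l|apply Rmin_r].
    - apply Rmin_r. }
  assert (HB1 : BV (Datatypes.S n) F1).
  { intros [|b s] Hs; simpl in Hs; try discriminate. injection Hs as Hs.
    destruct (Hrho s Hs) as [A _]. destruct (HB s Hs) as [C D]. destruct (Hnb (F s) C D) as [E _].
    destruct b; simpl; auto. }
  assert (Hsub1 : forall s b x, length s = n -> pcK (F1 (b :: s)) x -> pcK (F s) x).
  { intros s b x Hs Hx. unfold F1 in Hx. destruct (Hrho s Hs) as [A [B [C D]]]. destruct (HB s Hs) as [E G].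
    destruct (Hnb (F s) E G) as [E1 [E2 E3]]. destruct (F s) as [cc rr] eqn:EF. simpl in *.
    destruct b.
    - apply (pc_sub X d Hd K cc rr (nb (cc, rr)) (rho s)); auto.
    - apply (pc_sub X d Hd K cc rr cc (rho s)); auto. rewrite d_refl; auto. lra. }
  assert (Hdiam1 : forall s x y, length s = Datatypes.S n -> pcK (F1 s) x -> pcK (F1 s) y -> d x y <= 2 / INR (Datatypes.S n)).
  { intros [|b s] x y Hs Hx Hy; simpl in Hs; try discriminate. injection Hs as Hs.
    destruct (Hrho s Hs) as [A [B [C D]]].
    assert (d x y <= 2 * rho s).
    { destruct b; simpl in Hx, Hy; eapply (pc_diam X d Hd K); eauto. }
    unfold Rdiv. lra. }
  assert (Hsib : forall s x, length s = n -> pcK (F1 (true :: s)) x -> pcK (F1 (false :: s)) x -> False).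
  { intros s x Hs [_ H1] [_ H2]. simpl in H1, H2. destruct (Hrho s Hs) as [A [B [C D]]].
    destruct (HB s Hs) as [E G]. destruct (Hnb (F s) E G) as [E1 [E2 E3]].
    assert (0 < d (fst (F s)) (nb (F s))) by (apply d_neq; auto).
    pose proof (d_tri X d Hd (fst (F s)) x (nb (F s))). rewrite (d_sym X d Hd x) in H0. lra. }
  set (L := flat_map (fun s => flat_map (fun t => map (fun c => (s, t, c)) (seq 1 (Datatypes.S n))) (all_lists (Datatypes.S n))) (all_lists (Datatypes.S n))).
  destruct (fix_list (Datatypes.S n) L F1 HB1) as [F2 [[HB2 HS2] HC2]].
  exists F2. split; [split; [|split; [|split]]|].
  - auto.
  - intros s t x Hs Ht Hne Hxs Hxt. apply HS2 in Hxs; auto. apply HS2 in Hxt; auto.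
    destruct s as [|b s]; destruct t as [|b' t]; simpl in Hs, Ht; try discriminate.
    injection Hs as Hs. injection Ht as Ht.
    destruct (list_eq_dec Bool.bool_dec s t) as [E|E].
    + subst t. destruct b, b'; try congruence; eauto.
    + apply (HDj s t x); eauto.
  - intros s t c Hs Ht Hc. apply HC2; auto; try lia. unfold L. apply in_flat_map. exists s. split.
    rewrite <- Hs; apply all_lists_spec. apply in_flat_map. exists t. split. rewrite <- Ht; apply all_lists_spec.
    apply in_map_iff. exists c. split; auto. apply in_seq. lia.
  - intros s x y Hs _ Hx Hy. apply HS2 in Hx; auto. apply HS2 in Hy; auto. eapply Hdiam1; eauto.
  - intros s b x Hs Hx. apply HS2 in Hx; [|simpl; lia]. eauto.
Qed.

Lemma V0 : Valid 0 (fun _ => (k0, 1)).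
Proof. split; [|split; [|split]].
  - intros s _; simpl; split; auto; lra.
  - intros [|] [|] x Hs Ht Hne; simpl in *; try discriminate. congruence.
  - intros s t c _ _ Hc; lia.
  - intros s x y _ H; lia. Qed.

Definition nxt m (FV : {F | Valid m F}) : {F | Valid (Datatypes.S m) F /\ Child m F (proj1_sig FV)} :=
  constructive_indefinite_description _ (refine_ex m _ (proj2_sig FV)).

Fixpoint lvl (n : nat) : {F | Valid n F} :=
  match n with
  | O => exist _ (fun _ => (k0, 1)) V0
  | Datatypes.S m => exist _ (proj1_sig (nxt m (lvl m))) (proj1 (proj2_sig (nxt m (lvl m))))
  end.

Lemma lvl_child m : Child m (proj1_sig (lvl (Datatypes.S m))) (proj1_sig (lvl m)).
Proof. exact (proj2 (proj2_sig (nxt m (lvl m)))). Qed.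

Definition PI (s : list bool) (x : X) : Prop := pcK (proj1_sig (lvl (length s)) s) x.

Lemma PI_S1 s : m_closed d (PI s) /\ exists x, PI s x.
Proof. unfold PI. pose proof (proj2_sig (lvl (length s))) as [HB _]. set (F := proj1_sig (lvl (length s))) in *.
  destruct (HB s eq_refl) as [A B]. split.
  - apply pc_closed; auto.
  - exists (fst (F s)). split; auto. rewrite d_refl; auto. lra. Qed.

Lemma PI_S2 s b x : PI (b :: s) x -> PI s x.
Proof. unfold PI. intros H. apply (lvl_child (length s) s b x); auto. Qed.

Lemma PI_S3 s x : PI (true :: s) x -> PI (false :: s) x -> False.
Proof. unfold PI. simpl length. pose proof (proj2_sig (lvl (Datatypes.S (length s)))) as [_ [HDj _]].
  intros A B. apply (HDj (true :: s) (false :: s) x); auto; congruence. Qed.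

Lemma PI_S4 s b x y : PI (b :: s) x -> PI (b :: s) y -> d x y <= 2 / (INR (length s) + 1).
Proof. unfold PI. simpl length. pose proof (proj2_sig (lvl (Datatypes.S (length s)))) as [_ [_ [_ HDi]]].
  intros A B. rewrite <- S_INR. apply (HDi (b :: s)); auto; lia. Qed.

Definition Cs (k : nat) : X -> Prop := Dm X PI (false :: repeat true k).

Lemma indep_exists : exists Cs : nat -> X -> Prop, (forall k, CantorSep X d (Cs k)) /\ (forall k x, Cs k x -> K x) /\
  (forall k j x, Cs k x -> Cs j x -> k = j) /\
  (forall k j z w c, Cs k z -> Cs j w -> (1 <= c)%nat -> z <> Nat.iter c f w).
Proof. exists Cs. split; [|split; [|split]].
  - intros k. apply (Dm_cantorsep X d Hd Hcpt PI PI_S1 PI_S2 PI_S3 PI_S4).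
  - intros k x H. unfold Cs in H. apply Dm_sub in H. unfold PI in H. destruct H; auto.
  - intros k j x Hk Hj. unfold Cs in Hk, Hj. apply Dm_sub in Hk. apply Dm_sub in Hj.
    destruct (Nat.lt_total k j) as [L|[E|L]]; auto; exfalso.
    + assert (E : false :: repeat true j = (false :: repeat true (j - k - 1)) ++ repeat true (Datatypes.S k)).
      { change (true :: repeat true k) with (repeat true (Datatypes.S k)); change (true :: repeat true j) with (repeat true (Datatypes.S j)). rewrite <- app_comm_cons, <- repeat_app. f_equal. f_equal. lia. }
      rewrite E in Hj. apply P_anc in Hj; [|exact PI_S2].
      apply (P_disj X PI PI_S2 PI_S3 (false :: repeat true k) (repeat true (Datatypes.S k)) x); auto.
      simpl; rewrite ?repeat_length; auto. discriminate.
    + assert (E : false :: repeat true k = (false :: repeat true (k - j - 1)) ++ repeat true (Datatypes.S j)).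
      { change (true :: repeat true k) with (repeat true (Datatypes.S k)); change (true :: repeat true j) with (repeat true (Datatypes.S j)). rewrite <- app_comm_cons, <- repeat_app. f_equal. f_equal. lia. }
      rewrite E in Hk. apply P_anc in Hk; [|exact PI_S2].
      apply (P_disj X PI PI_S2 PI_S3 (false :: repeat true j) (repeat true (Datatypes.S j)) x); auto.
      simpl; rewrite ?repeat_length; auto. discriminate.
  - intros k j z w c Hz Hw Hc. destruct Hz as [_ Hz]. destruct Hw as [_ Hw].
    destruct (Hz c) as [s [Hs Ps]]. destruct (Hw c) as [t [Ht Pt]].
    unfold PI in Ps, Pt. rewrite Hs in Ps. rewrite Ht in Pt.
    pose proof (proj2_sig (lvl c)) as [_ [_ [HCo _]]]. apply (HCo s t c); auto. Qed.
End Indep.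

Lemma FC {X : Type} (d : X -> X -> R) (Hd : is_metric d) (M : X -> Prop) (l : list X) (F : X -> X -> Prop) :
  (forall q, m_closed d (F q)) -> forall c r, M c -> 0 < r ->
  (forall x, M x -> d c x < r -> exists q, In q l /\ F q x) ->
  exists q c' r', In q l /\ M c' /\ 0 < r' /\ forall x, M x -> d c' x <= r' -> F q x /\ d c x < r.
Proof. intros HF. induction l as [|q0 l IH]; intros c r Mc Hr H.
  - destruct (H c Mc) as [q [[] _]]. rewrite d_refl; auto.
  - destruct (classic (forall x, M x -> d c x <= r / 2 -> F q0 x)) as [Y|N].
    + exists q0, c, (r / 2). split; [simpl; auto|split; [auto|split; [lra|]]].
      intros x Mx Dx. split. apply Y; auto. lra.
    + apply not_all_ex_not in N. destruct N as [x0 N].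
      destruct (classic (M x0)) as [Mx0|]; [|exfalso; apply N; intros; contradiction].
      destruct (classic (d c x0 <= r / 2)) as [Dx0|]; [|exfalso; apply N; intros; contradiction].
      assert (Fx0 : ~ F q0 x0) by (intro; apply N; auto).
      destruct (HF q0 x0 Fx0) as [del [Hdel Hav]].
      set (r2 := Rmin del (r / 2)).
      assert (0 < r2) by (apply Rmin_pos; lra). assert (r2 <= del) by apply Rmin_l. assert (r2 <= r / 2) by apply Rmin_r.
      destruct (IH x0 r2 Mx0 H0) as [q [c' [r' [Hq [Mc' [Hr' G]]]]]].
      * intros x Mx Dx. destruct (H x Mx) as [q [[E|Hq] Fq]].
        -- pose proof (d_tri X d Hd c x0 x). lra.
        -- subst q. exfalso. apply (Hav x); auto. lra.
        -- exists q; auto.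
      * exists q, c', r'. split; [simpl; auto|split; [auto|split; [auto|]]].
        intros x Mx Dx. destruct (G x Mx Dx) as [G1 G2]. split; auto. pose proof (d_tri X d Hd c x0 x). lra.
Qed.

Section Lift.
Variable X : Type.
Variable d : X -> X -> R.
Variable f : X -> X.
Hypothesis Hd : is_metric d.
Hypothesis Hcpt : compact_space d.
Hypothesis Hf : continuous_map d f.
Variable M : X -> Prop.
Hypothesis HM : CantorSep X d M.
Variable n : nat.
Let g := Nat.iter n f.
Hypothesis Hginj : forall x y, M x -> M y -> g x = g y -> x = y.
Variable xU : X.
Variable rU : R.
Hypothesis HrU : 0 < rU.
Hypothesis HcovM : forall x, M x -> exists y, d xU y < rU / 2 /\ g y = g x.

Let pcM := pc d M.

Lemma Hgc : continuous_map d g. Proof. apply iter_cont; auto. Qed.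
Lemma HMc : m_closed d M. Proof. apply HM. Qed.
Lemma HMp : perfect_set d M. Proof. split. apply HMc. apply HM. Qed.

Definition Pre (Q : X -> Prop) (y : X) : Prop := exists x, Q x /\ g y = g x.

Lemma pre_closed Q : m_closed d Q -> m_closed d (Pre Q).
Proof. intros HQ. apply closed_ext with (fun y => (fun z => exists x, Q x /\ z = g x) (g y)).
  - intros y; split; intros [x [A B]]; exists x; split; auto.
  - apply (preimage_closed X d g (fun z => exists x, Q x /\ z = g x) Hgc). apply image_closed; auto. apply Hgc. Qed.

Definition good (st : (X -> Prop) * (X * R)) : Prop :=
  M (fst (snd st)) /\ 0 < snd (snd st) /\ m_closed d (fst st) /\
  (forall y, fst st y -> exists x, pcM (snd st) x /\ g y = g x) /\
  (forall x, pcM (snd st) x -> exists y, fst st y /\ g y = g x).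

Lemma shrink1 A p eps : good (A, p) -> 0 < eps -> exists A' p', good (A', p') /\ (forall y, A' y -> A y) /\
  (forall x, pcM p' x -> pcM p x) /\ (forall x y, A' x -> A' y -> d x y <= eps).
Proof. intros [Mc [Hr [HA [G1 G2]]]] Heps; simpl in *.
  destruct (Hcpt X (fun q y => d q y < eps / 2)) as [l Hl].
  - intros q; apply open_ball; auto.
  - intros y _. exists y. rewrite d_refl; auto. lra.
  - destruct (FC d Hd M l (fun q x => pcM p x /\ Pre (fun y => A y /\ d q y <= eps / 2) x)
       ltac:(intros q; apply closed_inter2; [apply (pc_closed X d Hd), HMc|apply pre_closed, closed_inter2; auto; apply closed_cball; auto])
       (fst p) (snd p) Mc Hr) as [q [c' [r' [Hq [Mc' [Hr' G]]]]]].
    + intros x Mx Dx. assert (Px : pcM p x) by (split; auto; lra).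
      destruct (G2 x Px) as [y [Ay Ey]]. destruct (Hl y Logic.I) as [q [Hq Dq]].
      exists q; split; auto. split; auto. exists y; split; auto. split; auto. lra.
    + exists (fun y => (A y /\ d q y <= eps / 2) /\ Pre (pcM (c', r')) y), (c', r').
      split; [split; [|split; [|split; [|split]]]|split; [|split]]; simpl.
      * auto.
      * auto.
      * apply closed_inter2. apply closed_inter2; auto. apply closed_cball; auto. apply pre_closed, (pc_closed X d Hd), HMc.
      * intros y [_ [x [A1 A2]]]. exists x; auto.
      * intros x [Mx Dx]. destruct (G x Mx Dx) as [[_ [y [[Ay Dy] Ey]]] _].
        exists y; split; auto. split; auto. exists x; split; auto. split; auto.
      * intros y [[Ay _] _]; auto.
      * intros x [Mx Dx]. destruct (G x Mx Dx) as [_ Dc]. split; auto. lra.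
      * intros x y [[_ Dx] _] [[_ Dy] _]. pose proof (d_tri X d Hd x q y). rewrite (d_sym X d Hd x q) in H. lra.
Qed.

Lemma split2 A p eps : good (A, p) -> 0 < eps -> exists A0 p0 A1 p1,
  good (A0, p0) /\ good (A1, p1) /\ (forall y, A0 y -> A y) /\ (forall y, A1 y -> A y) /\
  (forall x, pcM p0 x -> pcM p x) /\ (forall x, pcM p1 x -> pcM p x) /\
  (forall x y, A0 x -> A0 y -> d x y <= eps) /\ (forall x y, A1 x -> A1 y -> d x y <= eps) /\
  (forall x, pcM p0 x -> pcM p1 x -> False).
Proof. intros Hg Heps. destruct Hg as [Mc [Hr [HA [G1 G2]]]]; simpl in *.
  destruct p as [c r]; simpl in *.
  destruct (perfect_near2 X d Hd M c r HMp Mc Hr) as [c' [Mc' [Dc' Nc']]].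
  assert (Hcc : 0 < d c c') by (apply d_neq; auto).
  set (rho := Rmin (r / 2) (d c c' / 3)).
  assert (R1 : 0 < rho) by (apply Rmin_pos; lra). assert (R2 : rho <= r / 2) by apply Rmin_l.
  assert (R3 : rho <= d c c' / 3) by apply Rmin_r.
  assert (Hpiece : forall z, M z -> d c z <= r / 2 -> good ((fun y => A y /\ Pre (pcM (z, rho)) y), (z, rho))).
  { intros z Mz Dz. split; [|split; [|split; [|split]]]; simpl; auto.
    - apply closed_inter2; auto. apply pre_closed, (pc_closed X d Hd), HMc.
    - intros y [_ [x [A1 A2]]]. exists x; auto.
    - intros x Px. assert (pcM (c, r) x) by (apply (pc_sub X d Hd M c r z rho); auto).
      destruct (G2 x H) as [y [Ay Ey]]. exists y; split; auto. split; auto. exists x; auto. }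
  assert (Dcc : d c c <= r / 2) by (rewrite d_refl; auto; lra).
  destruct (shrink1 _ _ eps (Hpiece c Mc Dcc) Heps) as [A0 [p0 [Gd0 [S0 [T0 U0]]]]].
  destruct (shrink1 _ _ eps (Hpiece c' Mc' Dc') Heps) as [A1 [p1 [Gd1 [S1 [T1 U1]]]]].
  assert (a1 : forall y, A0 y -> A y) by (intros y Hy; exact (proj1 (S0 y Hy))).
  assert (a2 : forall y, A1 y -> A y) by (intros y Hy; exact (proj1 (S1 y Hy))).
  assert (a3 : forall x, pcM p0 x -> pcM (c, r) x) by (intros x Hx; apply T0 in Hx; apply (pc_sub X d Hd M c r c rho); auto).
  assert (a4 : forall x, pcM p1 x -> pcM (c, r) x) by (intros x Hx; apply T1 in Hx; apply (pc_sub X d Hd M c r c' rho); auto).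
  assert (a5 : forall x, pcM p0 x -> pcM p1 x -> False).
  { intros x Hx0 Hx1. apply T0 in Hx0. apply T1 in Hx1. destruct Hx0 as [_ H0]. destruct Hx1 as [_ H1]. simpl in *.
    pose proof (d_tri X d Hd c x c'). rewrite (d_sym X d Hd x c') in H. lra. }
  exists A0, p0, A1, p1. repeat (split; [assumption|]); assumption.
Qed.

Definition SplitP (m : nat) (st : (X -> Prop) * (X * R)) (pr : ((X -> Prop) * (X * R)) * ((X -> Prop) * (X * R))) : Prop :=
  good (fst pr) /\ good (snd pr) /\
  (forall y, fst (fst pr) y -> fst st y) /\ (forall y, fst (snd pr) y -> fst st y) /\
  (forall x, pcM (snd (fst pr)) x -> pcM (snd st) x) /\ (forall x, pcM (snd (snd pr)) x -> pcM (snd st) x) /\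
  (forall x y, fst (fst pr) x -> fst (fst pr) y -> d x y <= 2 / (INR m + 1)) /\
  (forall x y, fst (snd pr) x -> fst (snd pr) y -> d x y <= 2 / (INR m + 1)) /\
  (forall x, pcM (snd (fst pr)) x -> pcM (snd (snd pr)) x -> False).

Lemma split_ex m st : good st -> exists pr, SplitP m st pr.
Proof. destruct st as [A p]. intros Hg.
  assert (He : 0 < 2 / (INR m + 1)). { pose proof (pos_INR m). apply Rdiv_lt_0_compat; lra. }
  destruct (split2 A p _ Hg He) as [A0 [p0 [A1 [p1 H]]]]. exists ((A0, p0), (A1, p1)). exact H. Qed.

Definition spl m (sv : {st | good st}) : {pr | SplitP m (proj1_sig sv) pr} :=
  constructive_indefinite_description _ (split_ex m _ (proj2_sig sv)).

Definition child (b : bool) m (sv : {st | good st}) : {st | good st} :=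
  if b then exist _ (fst (proj1_sig (spl m sv))) (proj1 (proj2_sig (spl m sv)))
  else exist _ (snd (proj1_sig (spl m sv))) (proj1 (proj2 (proj2_sig (spl m sv)))).

Definition m0 : X := proj1_sig (constructive_indefinite_description _ (proj1 HM)).
Lemma Hm0 : M m0. Proof. exact (proj2_sig (constructive_indefinite_description _ (proj1 HM))). Qed.

Definition root_st : (X -> Prop) * (X * R) := (fun y => d xU y <= rU / 2 /\ Pre (pcM (m0, 1)) y, (m0, 1)).

Lemma root_good : good root_st.
Proof. split; [|split; [|split; [|split]]]; simpl.
  - apply Hm0.
  - lra.
  - apply closed_inter2. apply closed_cball; auto. apply pre_closed, (pc_closed X d Hd), HMc.
  - intros y [_ [x [A B]]]. exists x; auto.
  - intros x Px. destruct (HcovM x (proj1 Px)) as [y [Dy Ey]]. exists y; split; auto. split. lra. exists x; auto. Qed.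

Fixpoint bld (s : list bool) : {st | good st} :=
  match s with
  | nil => exist _ root_st root_good
  | b :: s' => child b (length s') (bld s')
  end.

Definition PA (s : list bool) : X -> Prop := fst (proj1_sig (bld s)).
Definition PL (s : list bool) : X -> Prop := pcM (snd (proj1_sig (bld s))).

Lemma bld_split s : SplitP (length s) (proj1_sig (bld s)) (proj1_sig (bld (true :: s)), proj1_sig (bld (false :: s))).
Proof. simpl. unfold child. destruct (spl (length s) (bld s)) as [[st0 st1] H]. simpl. exact H. Qed.

Lemma bld_good s : good (proj1_sig (bld s)). Proof. exact (proj2_sig (bld s)). Qed.

Lemma PA_S2 s b x : PA (b :: s) x -> PA s x.
Proof. unfold PA. pose proof (bld_split s) as [_ [_ [A [B _]]]]. simpl in A, B. destruct b; auto. Qed.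

Lemma PL_S2 s b x : PL (b :: s) x -> PL s x.
Proof. unfold PL. pose proof (bld_split s) as [_ [_ [_ [_ [A [B _]]]]]]. simpl in A, B. destruct b; auto. Qed.

Lemma PL_S3 s x : PL (true :: s) x -> PL (false :: s) x -> False.
Proof. unfold PL. pose proof (bld_split s) as [_ [_ [_ [_ [_ [_ [_ [_ A]]]]]]]]. simpl in A. eauto. Qed.

Lemma PA_S1 s : m_closed d (PA s) /\ exists x, PA s x.
Proof. unfold PA. destruct (bld_good s) as [Mc [Hr [HA [G1 G2]]]]. split; auto.
  destruct (G2 (fst (snd (proj1_sig (bld s))))) as [y [Hy _]].
  - split; auto. rewrite d_refl; auto. lra.
  - exists y; auto. Qed.

Lemma PA_L s y : PA s y -> exists x, PL s x /\ g y = g x.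
Proof. unfold PA, PL. destruct (bld_good s) as [_ [_ [_ [G1 _]]]]. auto. Qed.

Lemma PA_S3 s y : PA (true :: s) y -> PA (false :: s) y -> False.
Proof. intros H1 H2. destruct (PA_L _ _ H1) as [x1 [L1 E1]]. destruct (PA_L _ _ H2) as [x2 [L2 E2]].
  assert (x1 = x2). { apply Hginj. apply L1. apply L2. congruence. }
  subst. eapply PL_S3; eauto. Qed.

Lemma PA_S4 s b x y : PA (b :: s) x -> PA (b :: s) y -> d x y <= 2 / (INR (length s) + 1).
Proof. unfold PA. pose proof (bld_split s) as [_ [_ [_ [_ [_ [_ [A [B _]]]]]]]]. simpl in A, B. destruct b; auto. Qed.

Lemma lift_main : exists D, CantorSep X d D /\ (forall y, D y -> d xU y < rU) /\
  (forall x y, D x -> D y -> g x = g y -> x = y) /\ (forall y, D y -> exists z, M z /\ g y = g z).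
Proof. exists (Dm X PA nil). split; [|split; [|split]].
  - apply (Dm_cantorsep X d Hd Hcpt PA PA_S1 PA_S2 PA_S3 PA_S4).
  - intros y Hy. apply Dm_sub in Hy. destruct Hy as [Hy _]. lra.
  - intros x y Hx Hy E. apply NNPP; intros Hne. pose proof (d_neq X d Hd _ _ Hne) as Hpos.
    destruct (small_inv _ Hpos) as [N HN].
    destruct (proj2 Hx (Datatypes.S N)) as [t1 [L1 P1]]. destruct (proj2 Hy (Datatypes.S N)) as [t2 [L2 P2]].
    destruct (list_eq_dec Bool.bool_dec t1 t2) as [Et|Et].
    + subst t2. destruct t1 as [|b t]; simpl in L1; try discriminate. injection L1 as L1.
      pose proof (PA_S4 t b x y P1 P2). rewrite L1 in H. lra.
    + destruct (PA_L _ _ P1) as [x0 [Q1 F1]]. destruct (PA_L _ _ P2) as [y0 [Q2 F2]].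
      assert (x0 = y0). { apply Hginj. apply Q1. apply Q2. congruence. }
      subst. apply (P_disj X PL PL_S2 PL_S3 t1 t2 y0); auto. congruence.
  - intros y Hy. apply Dm_sub in Hy. destruct (PA_L _ _ Hy) as [x [Lx Ex]]. exists x; split; auto. apply Lx. Qed.
End Lift.

Section Main.
Variable X : Type.
Variable d : X -> X -> R.
Variable f : X -> X.
Hypothesis Hd : is_metric d.
Hypothesis Hcpt : compact_space d.
Hypothesis Hf : continuous_map d f.
Variable Sc K : X -> Prop.
Hypothesis HS : synd_scrambled d f Sc.
Hypothesis HfS : forall x, Sc x -> Sc (f x).
Hypothesis HKS : forall x, K x -> Sc x.
Hypothesis HK : cantor_set d K.
Hypothesis Hcov : forall U : X -> Prop, m_open d U -> (exists x, U x) ->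
     exists n : nat, forall x, K x -> exists y, U y /\ Nat.iter n f y = Nat.iter n f x.

Lemma iter_comp a b x : Nat.iter a f (Nat.iter b f x) = Nat.iter (a + b) f x.
Proof. symmetry; apply Nat.iter_add. Qed.

Lemma synd_shift (A A' : nat -> Prop) N0 : (forall n, (N0 <= n)%nat -> A n -> A' n) -> syndetic A -> syndetic A'.
Proof. intros H HA B HB. destruct (HA (fun n => B n /\ (N0 <= n)%nat)) as [n [An [Bn Hn]]].
  - intros L. destruct (HB (L + N0)%nat) as [m Hm]. exists (m + N0)%nat. intros i Hi. split.
    replace (m + N0 + i)%nat with (m + (N0 + i))%nat by lia. apply Hm; lia. lia.
  - exists n; auto. Qed.

Lemma transfer u v su sv N0 : (forall N, (N0 <= N)%nat -> Nat.iter N f u = Nat.iter N f su /\ Nat.iter N f v = Nat.iter N f sv) ->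
  (synd_proximal d f su sv -> synd_proximal d f u v) /\ (asymptotic d f u v -> asymptotic d f su sv) /\
  (forall e, limsup_ge d f e su sv -> limsup_ge d f e u v).
Proof. intros H. split; [|split].
  - intros Hp eta He. apply synd_shift with (fun n => d (Nat.iter n f su) (Nat.iter n f sv) < eta) N0; auto.
    intros n Hn A. destruct (H n Hn) as [E1 E2]. rewrite E1, E2; auto.
  - intros Ha e He. destruct (Ha e He) as [N HN]. exists (Nat.max N N0). intros n Hn.
    destruct (H n ltac:(lia)) as [E1 E2]. rewrite <- E1, <- E2. apply HN; lia.
  - intros e Hl del Hdel N. destruct (Hl del Hdel (Nat.max N N0)) as [n [Hn Hn2]]. exists n; split. lia.
    destruct (H n ltac:(lia)) as [E1 E2]. rewrite E1, E2; auto. Qed.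

Lemma HKc : m_closed d K. Proof. apply compact_closed; auto. apply HK. Qed.

Lemma main_T : exists T : X -> Prop,
    m_dense d T /\ mycielski_set d T /\ (forall x, T x -> T (f x)) /\
    synd_scrambled d f T /\
    (forall eps, 0 < eps -> synd_eps_scrambled d f eps Sc -> synd_eps_scrambled d f eps T).
Proof.
  destruct HK as [[k0 Hk0] [_ [HKp _]]].
  destruct (indep_exists X d f Hd Hcpt Hf Sc HS HfS K HKS HKc HKp k0 Hk0) as [Cs [HCs1 [HCs2 [HCs3 HCs4]]]].
  assert (Hl : forall m : nat, exists l : list X, forall y, exists x, In x l /\ d x y < / (INR m + 1)).
  { intros m. destruct (Hcpt X (fun x y => d x y < / (INR m + 1))) as [l Hl].
    - intros x; apply open_ball; auto.
    - intros y _. exists y. rewrite d_refl; auto. apply Rinv_0_lt_compat. pose proof (pos_INR m); lra.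
    - exists l. intros y. apply (Hl y Logic.I). }
  set (lm := fun m => proj1_sig (constructive_indefinite_description _ (Hl m))).
  assert (Hlm : forall m y, exists x, In x (lm m) /\ d x y < / (INR m + 1)).
  { intros m. exact (proj2_sig (constructive_indefinite_description _ (Hl m))). }
  set (ck := fun k => nth (snd (Cantor.of_nat k)) (lm (fst (Cantor.of_nat k))) k0).
  set (rk := fun k => / (INR (fst (Cantor.of_nat k)) + 1)).
  assert (Hrk : forall k, 0 < rk k). { intros k. unfold rk. apply Rinv_0_lt_compat. pose proof (pos_INR (fst (Cantor.of_nat k))); lra. }
  assert (HD : forall k, exists nD : nat * (X -> Prop), CantorSep X d (snd nD) /\ (forall y, snd nD y -> d (ck k) y < rk k) /\
     (forall x y, snd nD x -> snd nD y -> Nat.iter (fst nD) f x = Nat.iter (fst nD) f y -> x = y) /\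
     (forall y, snd nD y -> exists z, Cs k z /\ Nat.iter (fst nD) f y = Nat.iter (fst nD) f z)).
  { intros k. destruct (Hcov (fun y => d (ck k) y < rk k / 2)) as [n Hn].
    - apply open_ball; auto.
    - exists (ck k). rewrite d_refl; auto. pose proof (Hrk k); lra.
    - destruct (lift_main X d f Hd Hcpt Hf (Cs k) (HCs1 k) n) with (xU := ck k) (rU := rk k) as [D HDp]; auto.
      + intros x y Hx Hy E. apply (iter_inj_S X d f Hd Sc HS HfS n); auto; apply HKS; apply (HCs2 k); auto.
      + intros x Hx. apply Hn. apply (HCs2 k); auto.
      + exists (n, D). exact HDp. }
  set (nD := fun k => proj1_sig (constructive_indefinite_description _ (HD k))).
  assert (HnD : forall k, _) by (intros k; exact (proj2_sig (constructive_indefinite_description _ (HD k)))).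
  set (nk := fun k => fst (nD k)). set (Dk := fun k => snd (nD k)).
  assert (HD1 : forall k, CantorSep X d (Dk k)) by (intros k; apply (HnD k)).
  assert (HD2 : forall k y, Dk k y -> d (ck k) y < rk k) by (intros k; apply (HnD k)).
  assert (HD3 : forall k x y, Dk k x -> Dk k y -> Nat.iter (nk k) f x = Nat.iter (nk k) f y -> x = y) by (intros k; apply (HnD k)).
  assert (HD4 : forall k y, Dk k y -> exists z, Cs k z /\ Nat.iter (nk k) f y = Nat.iter (nk k) f z) by (intros k; apply (HnD k)).
  clearbody nk Dk. clear HnD nD HD.
  set (E := fun j x => exists y, Dk (fst (Cantor.of_nat j)) y /\ x = Nat.iter (snd (Cantor.of_nat j)) f y).
  set (T := fun x => exists j, E j x).
  assert (HT : forall x, T x <-> exists k a y, Dk k y /\ x = Nat.iter a f y).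
  { intros x; split.
    - intros [j [y [A B]]]. eauto.
    - intros [k [a [y [A B]]]]. exists (Cantor.to_nat (k, a)). unfold E. rewrite Cantor.cancel_of_to. simpl. eauto. }
  assert (Tinv : forall x, T x -> T (f x)).
  { intros x Hx. apply HT in Hx. destruct Hx as [k [a [y [A B]]]]. apply HT. exists k, (Datatypes.S a), y. split; auto.
    subst; auto. }
  assert (Tail : forall x, T x -> exists k a y z, Dk k y /\ x = Nat.iter a f y /\ Cs k z /\
     Nat.iter (nk k) f y = Nat.iter (nk k) f z /\ forall N, (nk k <= N)%nat -> Nat.iter N f x = Nat.iter N f (Nat.iter a f z)).
  { intros x Hx. apply HT in Hx. destruct Hx as [k [a [y [A B]]]]. destruct (HD4 k y A) as [z [Cz Ez]].
    exists k, a, y, z. split; [|split; [|split; [|split]]]; auto. intros N HN. subst x. rewrite !iter_comp.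
    replace (N + a)%nat with ((N + a - nk k) + nk k)%nat by lia. rewrite <- !iter_comp, Ez. auto. }
  assert (Sz : forall k a z, Cs k z -> Sc (Nat.iter a f z)).
  { intros k a z H. apply iter_S; auto. apply HKS. apply (HCs2 k); auto. }
  assert (Finj : forall u v, T u -> T v -> f u = f v -> u = v).
  { intros u v Hu Hv E1.
    destruct (Tail u Hu) as [k [a [y [z [Dy [Eu [Cz [Gy Tu]]]]]]]].
    destruct (Tail v Hv) as [j [b [y' [w [Dy' [Ev [Cw [Gy' Tv]]]]]]]].
    set (N := Datatypes.S (Nat.max (nk k) (nk j))).
    assert (E2 : Nat.iter a f z = Nat.iter b f w).
    { apply (iter_inj_S X d f Hd Sc HS HfS N); try (eapply Sz; eauto).
      rewrite <- Tu, <- Tv by (unfold N; lia). unfold N. rewrite !Nat.iter_succ_r, E1. auto. }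
    destruct (Nat.lt_total a b) as [L|[L|L]].
    - exfalso. replace b with (a + (b - a))%nat in E2 by lia. rewrite <- iter_comp in E2.
      apply (iter_inj_S X d f Hd Sc HS HfS a) in E2; try (eapply Sz; eauto); try (apply HKS; eapply HCs2; eauto).
      apply (HCs4 k j z w (b - a)%nat); auto. lia.
    - subst b. apply (iter_inj_S X d f Hd Sc HS HfS a) in E2; try (apply HKS; eapply HCs2; eauto).
      subst w. assert (k = j) by (eapply HCs3; eauto). subst j.
      assert (y = y') by (apply (HD3 k); auto; congruence).
      subst; auto.
    - exfalso. replace a with (b + (a - b))%nat in E2 by lia. rewrite <- iter_comp in E2.
      apply (iter_inj_S X d f Hd Sc HS HfS b) in E2; try (eapply Sz; eauto); try (apply HKS; eapply HCs2; eauto).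
      apply (HCs4 j k w z (a - b)%nat); auto. lia. }
  assert (IterInj : forall N u v, T u -> T v -> Nat.iter N f u = Nat.iter N f v -> u = v).
  { induction N as [|N IH]; simpl; auto. intros u v Hu Hv E1. apply Finj; auto.
    apply IH; auto. rewrite <- !Nat.iter_succ_r. auto. }
  assert (Pair : forall u v, T u -> T v -> u <> v -> exists su sv N0, Sc su /\ Sc sv /\ su <> sv /\
     forall N, (N0 <= N)%nat -> Nat.iter N f u = Nat.iter N f su /\ Nat.iter N f v = Nat.iter N f sv).
  { intros u v Hu Hv Hne.
    destruct (Tail u Hu) as [k [a [y [z [Dy [Eu [Cz [Gy Tu]]]]]]]].
    destruct (Tail v Hv) as [j [b [y' [w [Dy' [Ev [Cw [Gy' Tv]]]]]]]].
    exists (Nat.iter a f z), (Nat.iter b f w), (Nat.max (nk k) (nk j)). split; [|split; [|split]].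
    - eapply Sz; eauto.
    - eapply Sz; eauto.
    - intro Eq. apply Hne. apply (IterInj (Nat.max (nk k) (nk j))); auto. rewrite Tu, Tv by lia. rewrite Eq; auto.
    - intros N HN. split; [apply Tu|apply Tv]; lia. }
  assert (Hscr : synd_scrambled d f T).
  { split.
    - destruct (HD1 0%nat) as [[y Hy] [_ [Hp _]]]. destruct (Hp y Hy 1 ltac:(lra)) as [y' [Hy' [Hne _]]].
      exists y, y'. split; [|split]; auto; apply HT; exists 0%nat, 0%nat; eauto.
    - intros u v Hu Hv Hne. destruct (Pair u v Hu Hv Hne) as [su [sv [N0 [S1 [S2 [S3 H]]]]]].
      destruct (proj2 HS su sv S1 S2 S3) as [P1 P2]. destruct (transfer u v su sv N0 H) as [Q1 [Q2 _]].
      split; auto. }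
  exists T. split; [|split; [|split; [|split]]].
  -
    intros U HU [p Hp]. destruct (HU p Hp) as [r [Hr Hball]].
    destruct (small_inv r Hr) as [m Hm].
    destruct (Hlm m p) as [x [Hx Hxp]]. apply In_nth with (d := k0) in Hx. destruct Hx as [i [_ Hi]].
    set (k := Cantor.to_nat (m, i)).
    assert (Hck : ck k = x). { unfold ck, k. rewrite Cantor.cancel_of_to. simpl. auto. }
    assert (Hrk' : rk k = / (INR m + 1)). { unfold rk, k. rewrite Cantor.cancel_of_to. simpl. auto. }
    destruct (HD1 k) as [[y Hy] _]. exists y. split.
    + apply HT. exists k, 0%nat, y; auto.
    + apply Hball. pose proof (HD2 k y Hy) as Hd2. rewrite Hck, Hrk' in Hd2.
      pose proof (d_tri X d Hd p x y). rewrite (d_sym X d Hd p x) in H.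
      assert (2 / (INR m + 1) = / (INR m + 1) + / (INR m + 1)) by (unfold Rdiv; lra). lra.
  -
    exists E. split; [|intros x; unfold T; tauto].
    intros j. apply cantorsep_cantor; auto. unfold E. apply cantorsep_image; auto.
    + apply iter_cont; auto.
    + intros x y Hx Hy Exy. apply (IterInj (snd (Cantor.of_nat j))); auto; apply HT; exists (fst (Cantor.of_nat j)), 0%nat; eauto.
  - exact Tinv.
  - exact Hscr.
  - intros eps Heps [_ Hlim]. split; auto.
    intros u v Hu Hv Hne. destruct (Pair u v Hu Hv Hne) as [su [sv [N0 [S1 [S2 [S3 H]]]]]].
    destruct (transfer u v su sv N0 H) as [_ [_ Q3]]. apply Q3. apply Hlim; auto.
Qed.
End Main.

Theorem lemma3p11 (X : Type) (d : X -> X -> R) (f : X -> X)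
  (Hd : is_metric d) (Hcpt : compact_space d) (Hf : continuous_map d f)
  (S K : X -> Prop)
  (HS : synd_scrambled d f S) (HfS : forall x, S x -> S (f x))
  (HKS : forall x, K x -> S x) (HK : cantor_set d K)
  (Hcov : forall U : X -> Prop, m_open d U -> (exists x, U x) ->
     exists n : nat, forall x, K x -> exists y, U y /\ Nat.iter n f y = Nat.iter n f x) :
  exists T : X -> Prop,
    m_dense d T /\ mycielski_set d T /\ (forall x, T x -> T (f x)) /\
    synd_scrambled d f T /\
    (forall eps, 0 < eps -> synd_eps_scrambled d f eps S -> synd_eps_scrambled d f eps T).
Proof.
  exact (main_T X d f Hd Hcpt Hf S K HS HfS HKS HK Hcov).
Qed.
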